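(* Let $R$ be a commutative ring in which $2$ is invertible, let $Q$ be a quadratic space over $R$, and let $M=Q\perp\mathbb{H}(R)$. Then the DSER elementary orthogonal group coincides with the elementary orthogonal transvection group: $\mathrm{EO}_R(Q,\mathbb{H}(R))=\mathrm{ETransO}(M)$.
   Context: A quadratic $R$-module $(Q,q)$ is a finitely generated projective $R$-module with a quadratic form $q$; its bilinear form is $\langle x,y\rangle=q(x+y)-q(x)-q(y)$ (so $\langle x,x\rangle=2q(x)$). It is a quadratic space if $z\mapsto\langle z,-\rangle$ is an isomorphism $Q\to Q^*=\mathrm{Hom}_R(Q,R)$. For a finitely generated projective $P$, the hyperbolic space $\mathbb{H}(P)=P\oplus P^*$ carries $q(x,f)=f(x)$, i.e. $\langle(x_1,f_1),(x_2,f_2)\rangle=f_2(x_1)+f_1(x_2)$; orthogonal sums carry the sum of the forms. Here $P=R$ and $\mathbb{H}(R)$ has basis $x,f$ with $f(x)=1$. DSER transformations on $Q\perp\mathbb{H}(P)$: for $R$-linear $\alpha:Q\to P$, let $\alpha^*:P^*\to Q$ be determined by $\langle\alpha^*(g),z\rangle=g(\alpha(z))$ for all $z\in Q$, and set $E_\alpha(z,y,g)=(z-\alpha^*(g),\,y+\alpha(z)-\tfrac12\alpha\alpha^*(g),\,g)$. For $R$-linear $\beta:Q\to P^*$, let $\beta^*:P\to Q$ be determined by $\langle\beta^*(y),z\rangle=\beta(z)(y)$, and set $E^*_\beta(z,y,g)=(z-\beta^*(y),\,y,\,g+\beta(z)-\tfrac12\beta\beta^*(y))$. $\mathrm{EO}_R(Q,\mathbb{H}(P))$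 is the group generated by all $E_\alpha$, $E^*_\beta$. Elementary orthogonal transvections on $M=Q\perp\mathbb{H}(R)$: for $w\in Q$, writing elements as $(z,ax+bf)$ with $a,b\in R$, set $E^w_1(z,ax+bf)=(z-bw,\,(a+\langle z,w\rangle-bq(w))x+bf)$ and $E^w_2(z,ax+bf)=(z-aw,\,ax+(b+\langle z,w\rangle-aq(w))f)$. $\mathrm{ETransO}(M)$ is the group generated by all $E^w_1,E^w_2$, $w\in Q$. *)

(* Defs.v *)
From HB Require Import structures.
From mathcomp Require Import all_boot all_order all_algebra.
Set Implicit Arguments. Unset Strict Implicit. Unset Printing Implicit Defensive.
Import GRing.Theory.
Local Open Scope ring_scope.

Section Quadratic.
Variables (R : comUnitRingType) (Q : lmodType R).

Definition lin_map (U V : lmodType R) (f : U -> V) :=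
  forall (a : R) (x y : U), f (a *: x + y) = a *: f x + f y.
Definition Rlinear (f : Q -> R) :=
  forall (a : R) (x y : Q), f (a *: x + y) = a * f x + f y.

(* finitely generated projective: a direct summand of some free R^n *)
Definition fg_projective :=
  exists (n : nat) (i : Q -> 'rV[R]_n) (p : 'rV[R]_n -> Q),
    lin_map i /\ lin_map p /\ cancel i p.

Definition polar (q : Q -> R) (x y : Q) : R := q (x + y) - q x - q y.

Definition is_quadratic_form (q : Q -> R) :=
  (forall (a : R) (x : Q), q (a *: x) = a ^+ 2 * q x) /\
  (forall y, Rlinear (fun x => polar q x y)) /\
  (forall x, Rlinear (polar q x)).

(* quadratic space: z |-> <z,-> is an isomorphism Q -> Q^* = Hom_R(Q,R) *)
Definition quadratic_space (q : Q -> R) :=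
  [/\ is_quadratic_form q,
      (forall z1 z2, polar q z1 =1 polar q z2 -> z1 = z2) &
      (forall phi : Q -> R, Rlinear phi -> exists z, polar q z =1 phi)].

(* M = Q _|_ H(R); an element (z, (a, b)) stands for z + a x + b f,
   where x is the basis of P = R and f the dual basis of P^* (f(x) = 1).
   A functional g in P^* is identified with g(x), i.e. g = g(x) f. *)
Definition MT := (Q * (R * R))%type.

(* DSER transformation E_alpha, alpha : Q -> P = R, alphas = alpha^* : P^* -> Q *)
Definition adjoint_alpha (q : Q -> R) (alpha : Q -> R) (alphas : R -> Q) :=
  forall (g : R) (z : Q), polar q (alphas g) z = g * alpha z.

Definition E_alpha (alpha : Q -> R) (alphas : R -> Q) (m : MT) : MT :=
  let: (z, (y, g)) := m in
  (z - alphas g, (y + alpha z - 2%:R^-1 * alpha (alphas g), g)).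

(* DSER transformation E^*_beta, beta : Q -> P^* = R, betas = beta^* : P -> Q *)
Definition adjoint_beta (q : Q -> R) (beta : Q -> R) (betas : R -> Q) :=
  forall (y : R) (z : Q), polar q (betas y) z = beta z * y.

Definition Es_beta (beta : Q -> R) (betas : R -> Q) (m : MT) : MT :=
  let: (z, (y, g)) := m in
  (z - betas y, (y, g + beta z - 2%:R^-1 * beta (betas y))).

Definition DSER_gen (q : Q -> R) (s : MT -> MT) :=
  (exists alpha alphas, Rlinear alpha /\ adjoint_alpha q alpha alphas /\
     s =1 E_alpha alpha alphas) \/
  (exists beta betas, Rlinear beta /\ adjoint_beta q beta betas /\
     s =1 Es_beta beta betas).

Definition E1 (q : Q -> R) (w : Q) (m : MT) : MT :=
  let: (z, (a, b)) := m in
  (z - b *: w, (a + polar q z w - b * q w, b)).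
Definition E2 (q : Q -> R) (w : Q) (m : MT) : MT :=
  let: (z, (a, b)) := m in
  (z - a *: w, (a, b + polar q z w - a * q w)).

Definition Trans_gen (q : Q -> R) (s : MT -> MT) :=
  exists w, s =1 E1 q w \/ s =1 E2 q w.

End Quadratic.

Inductive gen_group (T : Type) (S : (T -> T) -> Prop) : (T -> T) -> Prop :=
| gg_id : gen_group S id
| gg_gen s t : S s -> gen_group S t -> gen_group S (s \o t)
| gg_inv s s' t : S s -> cancel s s' -> cancel s' s -> gen_group S t ->
    gen_group S (s' \o t)
| gg_ext s t : gen_group S s -> s =1 t -> gen_group S t.

Definition EO (R : comUnitRingType) (Q : lmodType R) (q : Q -> R) :=
  gen_group (DSER_gen q).
Definition ETransO (R : comUnitRingType) (Q : lmodType R) (q : Q -> R) :=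
  gen_group (Trans_gen q).

(* Main.v *)
Require Import Defs.
From mathcomp Require Import all_boot all_order all_algebra.
From mathcomp Require Import ring.
Set Implicit Arguments. Unset Strict Implicit.
Import GRing.Theory.
Local Open Scope ring_scope.

Lemma gen_group_mono (T : Type) (S S' : (T -> T) -> Prop) :
  (forall s, S s -> S' s) -> forall s, gen_group S s -> gen_group S' s.
Proof.
move=> H s; elim=> {s}.
- exact: gg_id.
- by move=> s t Ss _ IH; apply: gg_gen => //; apply: H.
- by move=> s s' t Ss c1 c2 _ IH; apply: (@gg_inv _ _ s) => //; apply: H.
- by move=> s t _ IH e; apply: gg_ext IH e.
Qed.

Section Aux.
Variables (R : comUnitRingType) (Q : lmodType R) (q : Q -> R).
Hypothesis Hq : is_quadratic_form q.
Hypothesis H2 : (2%:R : R) \is a GRing.unit.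

Lemma polar_sym x y : polar q x y = polar q y x.
Proof. rewrite /polar (addrC y x); ring. Qed.

Lemma q0 : q 0 = 0.
Proof. by have := Hq.1 0 0; rewrite scale0r expr0n /= mul0r. Qed.

Lemma polar_lin1 a x y : polar q (a *: x) y = a * polar q x y.
Proof.
have := Hq.2.1 y a x 0; rewrite addr0 => ->.
by rewrite /polar add0r q0 subr0 subrr addr0.
Qed.

Lemma polar_ww w : polar q w w = 2%:R * q w.
Proof.
rewrite /polar -[w + w]/(w *+ 2) -scaler_nat Hq.1; ring.
Qed.

Lemma half_cancel g w : 2%:R^-1 * polar q (g *: w) w = g * q w.
Proof. by rewrite polar_lin1 polar_ww mulrCA (mulKr H2). Qed.

Lemma trans_dser s : Trans_gen q s -> DSER_gen q s.
Proof.
case=> w [] Hs.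
- left; exists (fun z => polar q z w), (fun g => g *: w); split; first exact: Hq.2.1.
  split; first by move=> g z; rewrite polar_lin1 polar_sym.
  by move=> [z [y g]]; rewrite Hs /= half_cancel.
- right; exists (fun z => polar q z w), (fun g => g *: w); split; first exact: Hq.2.1.
  split; first by move=> g z; rewrite polar_lin1 polar_sym mulrC.
  by move=> [z [y g]]; rewrite Hs /= half_cancel.
Qed.

Hypothesis Hs : quadratic_space q.

Lemma adj_form (alpha : Q -> R) (alphas : R -> Q) w :
  (forall g z, polar q (alphas g) z = g * alpha z) ->
  polar q w =1 alpha -> forall g, alphas g = g *: w.
Proof.
move=> Ha Hw g; case: Hs => _ Hinj _; apply: Hinj => z.
by rewrite Ha polar_lin1 Hw.
Qed.

Lemma dser_trans s : DSER_gen q s -> Trans_gen q s.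
Proof.
case: Hs => _ _ Hsurj.
case=> [[alpha [alphas [Hl [Ha Hs']]]]|[beta [betas [Hl [Ha Hs']]]]].
- have [w Hw] := Hsurj _ Hl.
  have Hal := adj_form Ha Hw.
  exists w; left => -[z [y g]]; rewrite Hs' /= Hal -(Hw z) -(Hw (_ *: w)).
  by rewrite (polar_sym w z) (polar_sym w (g *: w)) half_cancel.
- have [w Hw] := Hsurj _ Hl.
  have Ha' : forall g z, polar q (betas g) z = g * beta z.
    by move=> g z; rewrite Ha mulrC.
  have Hal := adj_form Ha' Hw.
  exists w; right => -[z [y g]]; rewrite Hs' /= Hal -(Hw z) -(Hw (_ *: w)).
  by rewrite (polar_sym w z) (polar_sym w (y *: w)) half_cancel.
Qed.
End Aux.

Theorem mainTheorem1 (R : comUnitRingType) (Q : lmodType R) (q : Q -> R) :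
  (2%:R : R) \is a GRing.unit ->
  fg_projective Q ->
  quadratic_space q ->
  forall s : MT Q -> MT Q, EO q s <-> ETransO q s.
Proof.
move=> H2 _ Hs s; have Hq : is_quadratic_form q by case: Hs.
split; apply: gen_group_mono => t.
- exact: dser_trans.
- exact: trans_dser.
Qed.
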